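(* For all $x_1,x_2,y \in \mathbb{T}$ with $x_1 \neq x_2$, there exists $h \in \mathcal{H}$ such that \[ \max\{d(\gamma^{x_1}_h(1),y),d(\gamma^{x_2}_h(1),y)\} \leq \tfrac{3}{2}d(x_1,x_2). \]
   Context: $\mathcal H$ is the space of piecewise constant compactly supported functions $h=(h_1,h_{-1}):\mathbb{R}^+\to\mathbb{R}^2$. For fixed $\sigma>0$ and $x\in\mathbb{R}$, $\gamma^x_h$ is the solution of the control ODE $\frac{\mathrm{d}\gamma^x_h}{\mathrm{d}t}=c+\sigma^2\big(\mathfrak a(\gamma^x_h)-\tfrac12\sum_{k\in\mathbb{Z}}\mathfrak b_k'(\gamma^x_h)\mathfrak b_k(\gamma^x_h)\big)+\sigma\big(\mathfrak b_1(\gamma^x_h)h_1+\mathfrak b_{-1}(\gamma^x_h)h_{-1}\big)$, $\gamma^x_h(0)=x$, viewed on $\mathbb{T}=\mathbb{R}/\mathbb{Z}$ with torus distance $d$. Here, for a traveling pulse $u^*$ (speed $c$) of $\mathrm{d}u=Au\,\mathrm{d}t+f(u)\,\mathrm{d}t$ on $\mathcal X=H^{s,p}(\mathbb{R};\mathbb{R}^n)$, with $\mathcal T_xf=f(\cdot-x)$, isochron map $\pi_{\mathrm{iso}}$ (upright $\pi$ in the paper, not the circle constant; defined by $\lim_{t\to\infty}\|u^v(t)-u^*(\cdot-ct-\pi_{\mathrm{iso}}(v))\|_{\mathcal X}=0$), basis $e_k(x)=\sqrt2\cos(2\pi kx)$ ($k>0$), $e_0=1$, $e_k(x)=\sqrt2\sin(2\pi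 kx)$ ($k<0$), coefficients $\alpha_k$, nonlinearity $g$: $\mathfrak a(x)=\tfrac12\sum_k\alpha_k^2\big(\pi_{\mathrm{iso}}'(\mathcal T_xu^* )[g'(\mathcal T_xu^* )g(\mathcal T_xu^* )e_k^2]+\pi_{\mathrm{iso}}''(\mathcal T_xu^* )[g(\mathcal T_xu^* )e_k,g(\mathcal T_xu^* )e_k]\big)$, $\mathfrak b_k(x)=\alpha_k\pi_{\mathrm{iso}}'(\mathcal T_xu^* )[g(\mathcal T_xu^* )e_k]$. These are smooth, 1-periodic, and $\mathrm{span}\{\mathfrak b_1,\mathfrak b_{-1}\}=\{L\sin(2\pi\cdot+\eta):L,\eta\in\mathbb{R}\}$. *)

(* Defs.v *)
From Stdlib Require Import Reals.
From Coquelicot Require Import Coquelicot.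
Open Scope R_scope.

(* Torus distance on T = R/Z, for lifts a b : R. *)
Definition tdist (a b : R) : R :=
  Rmin (frac_part (a - b)) (1 - frac_part (a - b)).

Definition smooth (f : R -> R) : Prop := forall (n : nat) (x : R), ex_derive_n f n x.

Definition periodic1 (f : R -> R) : Prop := forall x, f (x + 1) = f x.

Definition span_is_sinusoids (b1 bm1 : R -> R) : Prop :=
  (forall al be : R, exists L eta : R, forall x,
      al * b1 x + be * bm1 x = L * sin (2 * PI * x + eta)) /\
  (forall L eta : R, exists al be : R, forall x,
      al * b1 x + be * bm1 x = L * sin (2 * PI * x + eta)).

Definition pc_cs (h : R -> R * R) : Prop :=
  exists (n : nat) (t : nat -> R) (v : nat -> R * R),
    t O = 0 /\
    (forall i, (i < n)%nat -> t i < t (S i)) /\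
    (forall i s, (i < n)%nat -> t i <= s < t (S i) -> h s = v i) /\
    (forall s, t n <= s -> h s = (0, 0)).

(* Drift of the control ODE:  c + sigma^2 (a(x) - 1/2 * S(x)),
   where S stands for sum_k b_k'(x) b_k(x). *)
Definition drift (c sigma : R) (a S : R -> R) (x : R) : R :=
  c + sigma ^ 2 * (a x - / 2 * S x).

(* gam is a (Caratheodory) solution on [0,1] of the control ODE
   d gam/dt = drift(gam) + sigma (b1(gam) h1 + bm1(gam) hm1),  gam(0) = x,
   in integral form. *)
Definition ctrl_sol (c sigma : R) (a S b1 bm1 : R -> R) (h : R -> R * R)
    (x : R) (gam : R -> R) : Prop :=
  forall t, 0 <= t <= 1 ->
    is_RInt (fun s => drift c sigma a S (gam s)
                      + sigma * (b1 (gam s) * fst (h s) + bm1 (gam s) * snd (h s)))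
            0 t (gam t - x).

(* Main.v *)
Require Import Defs.
From Stdlib Require Import Reals Lra Lia Classical ZArith.
From Coquelicot Require Import Coquelicot.
Open Scope R_scope.

Definition Lip (f : R -> R) (L : R) := forall x y, Rabs (f x - f y) <= L * Rabs (x - y).
Definition Bnd (f : R -> R) (M : R) := forall x, Rabs (f x) <= M.
Definition lipb f := exists L M, 0 <= L /\ 0 <= M /\ Lip f L /\ Bnd f M.

Lemma lip_cont f L : Lip f L -> forall x, continuous f x.
Proof.
  intros H x. apply continuity_pt_filterlim.
  intros eps Heps. exists (eps / (Rabs L + 1)). split.
  { apply Rdiv_lt_0_compat; [lra|]. pose proof (Rabs_pos L); lra. }
  intros y [_ Hy]. simpl in *. unfold R_dist in *.
  pose proof (Rabs_pos L) as HL. pose proof (Rabs_pos (y - x)) as Hr.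
  pose proof (H y x) as Hyx. pose proof (Rle_abs L) as HL2.
  assert (Hm : (Rabs L + 1) * Rabs (y - x) < eps).
  { apply Rmult_lt_compat_l with (r := Rabs L + 1) in Hy; [|lra].
    replace ((Rabs L + 1) * (eps / (Rabs L + 1))) with eps in Hy by (field; lra). lra. }
  nra.
Qed.

Lemma periodic_nat f : periodic1 f -> forall x (n : nat), f (x + INR n) = f x.
Proof.
  intros H x n. induction n. simpl. f_equal; ring.
  rewrite S_INR. replace (x + (INR n + 1)) with ((x + INR n) + 1) by ring. rewrite H. exact IHn.
Qed.

Lemma periodic_Z f : periodic1 f -> forall x (n : Z), f (x + IZR n) = f x.
Proof.
  intros H x n. destruct (Z_le_gt_dec 0 n).
  - rewrite <- (Z2Nat.id n) by lia. rewrite <- INR_IZR_INZ. apply periodic_nat; auto.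
  - replace n with (- Z.of_nat (Z.to_nat (- n)))%Z by lia.
    rewrite opp_IZR, <- INR_IZR_INZ.
    rewrite <- (periodic_nat f H (x + - INR (Z.to_nat (- n))) (Z.to_nat (-n))).
    f_equal; ring.
Qed.

Lemma frac_decomp x : x = IZR (Int_part x) + frac_part x.
Proof. unfold frac_part; ring. Qed.

Lemma smooth_lipb f : smooth f -> periodic1 f -> lipb f.
Proof.
  intros Hs Hp.
  assert (d1 : forall x, ex_derive f x) by (intro x; exact (Hs 1%nat x)).
  assert (d2 : forall x, ex_derive (Derive f) x) by (intro x; exact (Hs 2%nat x)).
  assert (cD : forall x, continuity_pt (Derive f) x).
  { intro x. apply continuity_pt_filterlim. exact (@ex_derive_continuous R_AbsRing R_NormedModule (Derive f) x (d2 x)). }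
  assert (pD : forall x, Derive f (x + 1) = Derive f x).
  { intro x. symmetry. apply is_derive_unique.
    assert (H1 : is_derive (fun t => f (t + 1)) x (scal 1 (Derive f (x + 1)))).
    { assert (Hg : is_derive (fun t : R => t + 1) x 1) by (auto_derive; auto; ring).
      exact (@is_derive_comp R_AbsRing R_NormedModule f (fun t => t + 1) x (Derive f (x+1)) 1 (Derive_correct _ _ (d1 _)) Hg). }
    replace (scal 1 (Derive f (x + 1))) with (Derive f (x+1)) in H1 by (unfold scal; simpl; unfold mult; simpl; ring). eapply is_derive_ext; [|exact H1]. intro t; simpl. apply Hp. }
  destruct (continuity_ab_maj (Derive f) 0 1) as [Mx [HMx _]]; [lra| intros; apply cD|].
  destruct (continuity_ab_min (Derive f) 0 1) as [mn [Hmn _]]; [lra| intros; apply cD|].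
  set (B := Rabs (Derive f Mx) + Rabs (Derive f mn)).
  assert (HB0 : 0 <= B) by (unfold B; pose proof (Rabs_pos (Derive f Mx)); pose proof (Rabs_pos (Derive f mn)); lra).
  assert (HB : forall x, Rabs (Derive f x) <= B).
  { intro x. assert (E : Derive f x = Derive f (frac_part x)).
    { replace (frac_part x) with (x + IZR (- Int_part x)).
      symmetry. apply (periodic_Z (Derive f)). intro; apply pD.
      rewrite opp_IZR. unfold frac_part. ring. }
    rewrite E. destruct (base_fp x) as [h1 h2].
    specialize (HMx (frac_part x) (conj (Rge_le _ _ h1) (Rlt_le _ _ h2))).
    specialize (Hmn (frac_part x) (conj (Rge_le _ _ h1) (Rlt_le _ _ h2))).
    unfold B. pose proof (Rle_abs (Derive f Mx)). pose proof (Rle_abs (- Derive f mn)).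
    rewrite Rabs_Ropp in H0. pose proof (Rabs_pos (Derive f Mx)). pose proof (Rabs_pos (Derive f mn)). apply Rabs_le. lra. }
  assert (HL : Lip f B).
  { intros x y. destruct (MVT_gen f y x (Derive f)) as [c [_ Hc]].
    - intros; apply Derive_correct, d1.
    - intros. apply continuity_pt_filterlim. exact (@ex_derive_continuous R_AbsRing R_NormedModule f _ (d1 _)).
    - rewrite Hc, Rabs_mult. apply Rmult_le_compat_r. apply Rabs_pos. apply HB. }
  exists B, (B + Rabs (f 0)). repeat split; auto.
  - pose proof (Rabs_pos (f 0)); lra.
  - intro x. pose proof (periodic_Z f Hp x (- Int_part x)) as E.
    rewrite opp_IZR in E. replace (x + - IZR (Int_part x)) with (frac_part x) in E by (unfold frac_part; ring).
    rewrite <- E. destruct (base_fp x) as [h1 h2].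
    pose proof (HL (frac_part x) 0). rewrite Rminus_0_r in H.
    rewrite (Rabs_right (frac_part x)) in H by lra.
    pose proof (Rabs_triang_inv (f (frac_part x)) (f 0)). nra.
Qed.

Lemma lipb_const k : lipb (fun _ => k).
Proof.
  exists 0, (Rabs k). repeat split; try lra. apply Rabs_pos.
  intros x y. rewrite Rminus_eq_0, Rabs_R0. lra. intros x. lra.
Qed.

Lemma lipb_plus f g : lipb f -> lipb g -> lipb (fun x => f x + g x).
Proof.
  intros [L1 [M1 [? [? [H1 H2]]]]] [L2 [M2 [? [? [H3 H4]]]]].
  exists (L1 + L2), (M1 + M2). repeat split; try lra.
  - intros x y. replace (f x + g x - (f y + g y)) with ((f x - f y) + (g x - g y)) by ring.
    eapply Rle_trans. apply Rabs_triang. specialize (H1 x y). specialize (H3 x y). lra.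
  - intros x. eapply Rle_trans. apply Rabs_triang. specialize (H2 x). specialize (H4 x). lra.
Qed.

Lemma lipb_scal k f : lipb f -> lipb (fun x => k * f x).
Proof.
  intros [L1 [M1 [? [? [H1 H2]]]]].
  exists (Rabs k * L1), (Rabs k * M1). pose proof (Rabs_pos k). repeat split; try nra.
  - intros x y. rewrite <- Rmult_minus_distr_l, Rabs_mult, Rmult_assoc.
    apply Rmult_le_compat_l; auto.
  - intros x. rewrite Rabs_mult. apply Rmult_le_compat_l; auto.
Qed.

Lemma lipb_ext f g : lipb f -> (forall x, f x = g x) -> lipb g.
Proof.
  intros [L1 [M1 [? [? [H1 H2]]]]] E. exists L1, M1. repeat split; auto.
  intros x y; rewrite <- !E; auto. intros x; rewrite <- E; auto.
Qed.
Definition SolOnT (f : R -> R -> R) (a b : R) (g : R -> R) : Prop :=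
  forall s t, a <= s -> s <= t -> t <= b -> is_RInt (fun r => f r (g r)) s t (g t - g s).

Lemma is_RInt_pt0 (f : R -> R) a v : v = 0 -> is_RInt f a a v.
Proof. intros ->. exact (is_RInt_point f a). Qed.

Lemma SolOnT_base f a b g :
  (forall t, a <= t <= b -> is_RInt (fun r => f r (g r)) a t (g t - g a)) -> SolOnT f a b g.
Proof.
  intros H s t Has Hst Htb.
  destruct (Req_dec s t) as [<-|Hne]. { apply is_RInt_pt0; ring. }
  destruct (Req_dec a s) as [<-|Hne2]. { apply H; lra. }
  assert (a < s) by (destruct Has; [auto|contradiction]).
  assert (s < t) by (destruct Hst; [auto|contradiction]).
  assert (Ht : a <= t <= b) by lra. assert (Hs : a <= s <= b) by lra. assert (Hc : a < s < t) by lra.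
  pose proof (is_RInt_Chasles_2 _ a s t _ _ Hc (H t Ht) (H s Hs)) as K.
  replace (g t - g s) with (minus (g t - g a) (g s - g a)). exact K.
  unfold minus, plus, opp; simpl. ring.
Qed.

Lemma SolOnT_glue f a b c g : SolOnT f a b g -> SolOnT f b c g -> a <= b -> b <= c -> SolOnT f a c g.
Proof.
  intros H1 H2 hab hbc s t Has Hst Htc.
  destruct (Rle_dec t b). { apply H1; lra. }
  destruct (Rle_dec b s). { apply H2; lra. }
  assert (K1 := H1 s b Has ltac:(lra) ltac:(lra)). assert (K2 := H2 b t ltac:(lra) ltac:(lra) Htc).
  pose proof (is_RInt_Chasles _ s b t _ _ K1 K2) as K.
  replace (g t - g s) with (plus (g b - g s) (g t - g b)). exact K.
  unfold plus; simpl. ring.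
Qed.

Lemma SolOnT_ext f f' a b g g' : SolOnT f a b g ->
  (forall r, a < r < b -> f r (g r) = f' r (g' r)) -> (forall r, a <= r <= b -> g r = g' r) ->
  SolOnT f' a b g'.
Proof.
  intros H Ef Eg s t Has Hst Htb.
  rewrite <- (Eg t), <- (Eg s) by lra.
  apply (is_RInt_ext (fun r => f r (g r))).
  { intros x. rewrite Rmin_left, Rmax_right by lra. intros; apply Ef; lra. }
  apply H; lra.
Qed.

Lemma SolOnT_restr f a b a' b' g : SolOnT f a b g -> a <= a' -> b' <= b -> SolOnT f a' b' g.
Proof. intros H h1 h2 s t ? ? ?. apply H; lra. Qed.

Lemma SolOnT_const f a x : SolOnT f a a (fun _ => x).
Proof. intros s t ? ? ?. replace t with s by lra. apply is_RInt_pt0; ring. Qed.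
Definition clamp (a b t : R) := Rmax a (Rmin b t).

Lemma clamp_in a b t : a <= b -> a <= clamp a b t <= b.
Proof. intros. unfold clamp, Rmax, Rmin. repeat destruct Rle_dec; lra. Qed.

Lemma clamp_id a b t : a <= t <= b -> clamp a b t = t.
Proof. intros. unfold clamp, Rmax, Rmin. repeat destruct Rle_dec; lra. Qed.

Lemma clamp_lip a b t u : a <= b -> Rabs (clamp a b t - clamp a b u) <= Rabs (t - u).
Proof.
  intros. unfold clamp, Rmax, Rmin. unfold Rabs.
  repeat destruct Rle_dec; repeat destruct Rcase_abs; lra.
Qed.

Lemma nat_unbounded r : exists n : nat, r < INR n.
Proof.
  destruct (archimed (Rabs r)) as [h1 h2]. pose proof (Rabs_pos r).
  assert (0 < IZR (up (Rabs r))) by lra. apply lt_0_IZR in H0.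
  exists (Z.to_nat (up (Rabs r))). rewrite INR_IZR_INZ, Z2Nat.id by lia.
  pose proof (Rle_abs r). lra.
Qed.

Fixpoint pic (F : R -> R) (x a b : R) (k : nat) : R -> R :=
  match k with
  | O => fun _ => x
  | S k' => fun t => x + RInt (fun s => F (pic F x a b k' s)) a (clamp a b t)
  end.

Lemma cont_ex_RInt (f : R -> R) c d : (forall s, continuous f s) -> ex_RInt f c d.
Proof. intros H. apply (@ex_RInt_continuous R_CompleteNormedModule). intros; apply H. Qed.

Lemma RInt_minus_R (f g : R -> R) c d : ex_RInt f c d -> ex_RInt g c d ->
  RInt (fun y => f y - g y) c d = RInt f c d - RInt g c d.
Proof. intros. exact (RInt_minus f g c d H H0). Qed.

Lemma RInt_bound f c d B : c <= d -> (forall s, continuous f s) ->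
  (forall s, c <= s <= d -> Rabs (f s) <= B) -> Rabs (RInt f c d) <= (d - c) * B.
Proof. intros. apply abs_RInt_le_const; auto. apply cont_ex_RInt; auto. Qed.

Lemma RInt_bound_abs f c d B : (forall s, continuous f s) ->
  (forall s, Rabs (f s) <= B) -> Rabs (RInt f c d) <= Rabs (d - c) * B.
Proof.
  intros. apply (@norm_RInt_le_const_abs R_NormedModule f c d (RInt f c d) B).
  intros; apply H0. apply (@RInt_correct R_CompleteNormedModule). apply cont_ex_RInt; auto.
Qed.

Lemma lip_comp F L M p : 0 <= L -> Lip F L -> Lip p M -> Lip (fun s => F (p s)) (L * M).
Proof.
  intros HL H1 H2 s u. eapply Rle_trans. apply H1. rewrite Rmult_assoc.
  apply Rmult_le_compat_l; auto.
Qed.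

Lemma pic_lip F L M x a b : 0 <= L -> 0 <= M -> Lip F L -> Bnd F M -> a <= b ->
  forall k, Lip (pic F x a b k) M.
Proof.
  intros HL HM HF HB hab k. induction k; simpl.
  - intros t u. rewrite Rminus_eq_0, Rabs_R0. pose proof (Rabs_pos (t - u)); nra.
  - intros t u. set (f := fun s => F (pic F x a b k s)).
    assert (cf : forall s, continuous f s) by (apply (lip_cont f (L * M)); unfold f; apply (lip_comp F L M (pic F x a b k)); auto).
    pose proof (RInt_Chasles f a (clamp a b u) (clamp a b t) (cont_ex_RInt _ _ _ cf) (cont_ex_RInt _ _ _ cf)) as E.
    simpl in E. unfold plus in E; simpl in E.
    replace (x + RInt f a (clamp a b t) - (x + RInt f a (clamp a b u))) with (RInt f (clamp a b u) (clamp a b t)) by lra.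
    eapply Rle_trans. { apply RInt_bound_abs with (B := M). exact cf. intros; apply HB. }
    rewrite Rmult_comm. apply Rmult_le_compat_l; auto.
    apply clamp_lip; auto.
Qed.

Lemma pic_cont F L M x a b k : 0 <= L -> 0 <= M -> Lip F L -> Bnd F M -> a <= b ->
  forall s, continuous (fun s => F (pic F x a b k s)) s.
Proof. intros. apply (lip_cont _ (L * M)), lip_comp; auto. apply (pic_lip F L M); auto. Qed.

Lemma pic_diff F L M x a b : 0 <= L -> 0 <= M -> Lip F L -> Bnd F M -> a <= b -> L * (b - a) <= 1/2 ->
  forall k t, Rabs (pic F x a b (S k) t - pic F x a b k t) <= M * (b - a) * (1/2) ^ k.
Proof.
  intros HL HM HF HB hab hLt k. induction k; intro t.
  - simpl. assert (E0 : forall y : R, x + y - x = y) by (intro; ring). rewrite E0.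
    pose proof (clamp_in a b t hab).
    eapply Rle_trans. apply RInt_bound with (B := M). lra.
    intros; apply continuous_const. intros; apply HB. nra.
  - change (pic F x a b (S (S k)) t) with (x + RInt (fun s => F (pic F x a b (S k) s)) a (clamp a b t)).
    change (pic F x a b (S k) t) with (x + RInt (fun s => F (pic F x a b k s)) a (clamp a b t)).
    pose proof (clamp_in a b t hab).
    pose proof (pic_cont F L M x a b (S k) HL HM HF HB hab) as c1.
    pose proof (pic_cont F L M x a b k HL HM HF HB hab) as c0.
    pose proof (RInt_minus_R _ _ a (clamp a b t) (cont_ex_RInt _ _ _ c1) (cont_ex_RInt _ _ _ c0)) as E.
    assert (E1 : forall y z : R, x + y - (x + z) = y - z) by (intros; ring). rewrite E1.
    match goal with |- Rabs ?X <= _ => replace X with (RInt (fun y => F (pic F x a b (S k) y) - F (pic F x a b k y)) a (clamp a b t)) by exact E end.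
    clear E E1.
    eapply Rle_trans. apply RInt_bound with (B := L * (M * (b - a) * (1/2) ^ k)). lra.
    { intros s. apply (continuous_minus (fun s => F (pic F x a b (S k) s)) (fun s => F (pic F x a b k s))); auto. }
    { intros s _.
      eapply Rle_trans. apply HF. apply Rmult_le_compat_l; auto. }
    pose proof (pow_le (1/2) k ltac:(lra)).
    simpl. assert (0 <= M * (b - a) * (1/2)^k) by (apply Rmult_le_pos; nra).
    assert (clamp a b t - a <= b - a) by lra.
    assert (0 <= clamp a b t - a) by lra.
    assert ((clamp a b t - a) * L <= 1/2) by nra.
    nra.
Qed.

Lemma pic_cauchy F L M x a b : 0 <= L -> 0 <= M -> Lip F L -> Bnd F M -> a <= b -> L * (b - a) <= 1/2 ->
  forall k j t, Rabs (pic F x a b (k + j) t - pic F x a b k t) <= 2 * M * (b - a) * ((1/2) ^ k - (1/2) ^ (k + j)).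
Proof.
  intros HL HM HF HB hab hLt k j t. induction j.
  - rewrite Nat.add_0_r, Rminus_eq_0, Rabs_R0, Rminus_eq_0. lra.
  - rewrite Nat.add_succ_r.
    pose proof (pic_diff F L M x a b HL HM HF HB hab hLt (k + j) t).
    replace (pic F x a b (S (k + j)) t - pic F x a b k t) with
      ((pic F x a b (S (k + j)) t - pic F x a b (k+j) t) + (pic F x a b (k + j) t - pic F x a b k t)) by ring.
    eapply Rle_trans. apply Rabs_triang.
    simpl pow. nra.
Qed.
Lemma pic_at_a F x a b k : a <= b -> pic F x a b k a = x.
Proof.
  intros hab. destruct k; simpl; auto.
  rewrite clamp_id by lra. rewrite RInt_point. simpl. unfold zero; simpl. ring.
Qed.

Lemma picard_local F L M x a b : 0 <= L -> 0 <= M -> Lip F L -> Bnd F M -> a <= b -> L * (b - a) <= 1/2 ->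
  exists g, g a = x /\ SolOnT (fun _ w => F w) a b g.
Proof.
  intros HL HM HF HB hab hLt.
  set (p := pic F x a b).
  set (C := 2 * M * (b - a)).
  assert (HC : 0 <= C) by (unfold C; nra).
  assert (Hc : forall k j t, Rabs (p (k + j)%nat t - p k t) <= C * (1/2) ^ k).
  { intros. eapply Rle_trans. apply (pic_cauchy F L M x a b); auto.
    pose proof (pow_le (1/2) (k + j) ltac:(lra)). fold C. apply Rmult_le_compat_l; lra. }
  assert (Hsmall : forall eps, 0 < eps -> exists N, forall n, (N <= n)%nat -> C * (1/2) ^ n < eps).
  { intros eps Heps. destruct (pow_lt_1_zero (1/2) ltac:(rewrite Rabs_right; lra) (eps / (C + 1))) as [N HN].
    { apply Rdiv_lt_0_compat; lra. }
    exists N. intros n Hn. specialize (HN n Hn). rewrite Rabs_right in HN by (apply Rle_ge, pow_le; lra).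
    apply Rmult_lt_compat_l with (r := C + 1) in HN; [|lra].
    replace ((C + 1) * (eps / (C + 1))) with eps in HN by (field; lra).
    pose proof (pow_le (1/2) n ltac:(lra)). nra. }
  assert (Hex : forall t, ex_finite_lim_seq (fun k => p k t)).
  { intro t. apply ex_lim_seq_cauchy_corr. intros eps.
    destruct (Hsmall eps (cond_pos eps)) as [N HN]. exists N. intros n m Hn Hm.
    destruct (le_lt_dec n m).
    - replace m with (n + (m - n))%nat by lia. rewrite Rabs_minus_sym.
      eapply Rle_lt_trans. apply Hc. apply HN; auto.
    - replace n with (m + (n - m))%nat by lia.
      eapply Rle_lt_trans. apply Hc. apply HN; auto. }
  set (g := (fun t => real (Lim_seq (fun k => p k t))) : R -> R).
  assert (Hlim : forall t, is_lim_seq (fun k => p k t) (g t)).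
  { intro t. apply Lim_seq_correct'. apply Hex. }
  assert (Hbd : forall k t, Rabs (g t - p k t) <= C * (1/2) ^ k).
  { intros k t. apply Rle_plus_epsilon. intros eps Heps.
    pose proof (proj2 (is_lim_seq_spec _ _) (Hlim t)) as HL2.
    destruct (HL2 (mkposreal eps Heps)) as [N HN].
    specialize (HN (max N k) (Nat.le_max_l _ _)). simpl in HN.
    replace (max N k) with (k + (max N k - k))%nat in HN by lia.
    pose proof (Hc k (max N k - k)%nat t).
    replace (g t - p k t) with (- (p (k + (max N k - k))%nat t - g t) + (p (k + (max N k - k))%nat t - p k t)) by ring.
    eapply Rle_trans. apply Rabs_triang. rewrite Rabs_Ropp. lra. }
  assert (Hga : g a = x).
  { unfold g. rewrite (Lim_seq_ext _ (fun _ => x)). rewrite Lim_seq_const. reflexivity.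
    intro k. apply pic_at_a; auto. }
  exists g. split; auto.
  apply SolOnT_base. intros t Ht. rewrite Hga.
  assert (Hcont : forall k s, continuous (fun s => F (p k s)) s).
  { intros. apply (pic_cont F L M x a b k); auto. }
  destruct (filterlim_RInt (fun k s => F (p k s)) a t eventually eventually_filter (fun s => F (g s))
              (fun k => RInt (fun s => F (p k s)) a t)) as [If [HIf HIn]].
  - intros k. apply (@RInt_correct R_CompleteNormedModule). apply cont_ex_RInt. apply Hcont.
  - apply filterlim_locally. intros eps.
    destruct (Hsmall (eps / (L + 1))) as [N HN].
    { apply Rdiv_lt_0_compat. apply cond_pos. lra. }
    exists N. intros n Hn. intro s. change (Rabs (F (p n s) - F (g s)) < eps).
    eapply Rle_lt_trans. apply HF.
    specialize (HN n Hn). pose proof (Hbd n s). rewrite Rabs_minus_sym in H.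
    apply Rle_lt_trans with ((L + 1) * (C * (1/2) ^ n)).
    { pose proof (Rabs_pos (p n s - g s)). nra. }
    apply Rmult_lt_compat_l with (r := L + 1) in HN; [|lra].
    replace ((L + 1) * (eps / (L + 1))) with (pos eps) in HN by (field; lra). exact HN.
  - assert (E : If = g t - x).
    { assert (H1 : is_lim_seq (fun k => RInt (fun s => F (p k s)) a t) If) by exact HIf.
      assert (H2 : is_lim_seq (fun k => RInt (fun s => F (p k s)) a t) (g t - x)).
      { apply (is_lim_seq_ext (fun k => p (S k) t - x)).
        - intro k. unfold p. simpl. rewrite clamp_id by lra. ring.
        - apply is_lim_seq_minus'. apply (is_lim_seq_incr_1 (fun k => p k t)). apply Hlim.
          apply is_lim_seq_const. }
      apply is_lim_seq_unique in H1. apply is_lim_seq_unique in H2. rewrite H1 in H2. injection H2; auto. }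
    rewrite <- E. exact HIn.
Qed.
Lemma exist_sol F L M a b : 0 <= L -> 0 <= M -> Lip F L -> Bnd F M -> a <= b ->
  forall x, exists g, g a = x /\ SolOnT (fun _ w => F w) a b g.
Proof.
  intros HL HM HF HB hab.
  set (tau := / (2 * (L + 1))).
  assert (Ht0 : 0 < tau) by (unfold tau; apply Rinv_0_lt_compat; lra).
  assert (HLt : L * tau <= 1/2).
  { unfold tau. apply Rmult_le_reg_l with (r := 2 * (L + 1)). lra.
    field_simplify; lra. }
  assert (Hn : forall n x, exists g, g a = x /\ SolOnT (fun _ w => F w) a (a + INR n * tau) g).
  { induction n; intro x.
    - exists (fun _ => x). split; auto. simpl. rewrite Rmult_0_l, Rplus_0_r. apply SolOnT_const.
    - destruct (IHn x) as [g1 [Hg1 S1]].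
      set (c := a + INR n * tau).
      assert (Hc0 : a <= c) by (unfold c; pose proof (pos_INR n); nra).
      destruct (picard_local F L M (g1 c) c (c + tau) HL HM HF HB ltac:(lra) ltac:(replace (c + tau - c) with tau by ring; exact HLt)) as [g2 [Hg2 S2]].
      exists (fun r => if Rle_dec r c then g1 r else g2 r). split.
      { destruct Rle_dec; auto. lra. }
      replace (a + INR (S n) * tau) with (c + tau) by (unfold c; rewrite S_INR; ring).
      apply SolOnT_glue with c; try lra.
      + eapply SolOnT_ext with (g := g1); [exact S1| |].
        * intros r Hr. destruct Rle_dec; [reflexivity|lra].
        * intros r Hr. destruct Rle_dec; [reflexivity|lra].
      + eapply SolOnT_ext with (g := g2); [exact S2| |].
        * intros r Hr. destruct Rle_dec; [lra|reflexivity].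
        * intros r Hr. destruct Rle_dec; [|reflexivity]. replace r with c by lra. auto. }
  intro x. destruct (nat_unbounded ((b - a) / tau)) as [n Hn'].
  destruct (Hn n x) as [g [Hg Sg]]. exists g. split; auto.
  apply SolOnT_restr with a (a + INR n * tau); [exact Sg|lra|].
  apply Rmult_lt_compat_r with (r := tau) in Hn'; auto.
  replace ((b - a) / tau * tau) with (b - a) in Hn' by (field; lra). lra.
Qed.
Lemma Rabs_le_inv x y : Rabs x <= y -> - y <= x /\ x <= y.
Proof. unfold Rabs; destruct Rcase_abs; intros; lra. Qed.

Lemma sol_move F M a b g s r : SolOnT (fun _ w => F w) a b g -> Bnd F M ->
  a <= s -> s <= r -> r <= b -> Rabs (g r - g s) <= (r - s) * M.
Proof.
  intros H HB h1 h2 h3. pose proof (H s r h1 h2 h3) as K.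
  exact (@norm_RInt_le_const R_NormedModule _ s r _ M h2 (fun x _ => HB (g x)) K).
Qed.

Lemma sol_upper F a b g s r K : SolOnT (fun _ w => F w) a b g ->
  a <= s -> s <= r -> r <= b -> (forall u, s < u < r -> F (g u) <= K) -> g r - g s <= (r - s) * K.
Proof.
  intros H h1 h2 h3 HK. pose proof (H s r h1 h2 h3) as I1.
  pose proof (is_RInt_const s r K) as I2.
  exact (is_RInt_le _ _ s r _ _ h2 I1 I2 HK).
Qed.

Lemma sol_lower F a b g s r K : SolOnT (fun _ w => F w) a b g ->
  a <= s -> s <= r -> r <= b -> (forall u, s < u < r -> K <= F (g u)) -> (r - s) * K <= g r - g s.
Proof.
  intros H h1 h2 h3 HK. pose proof (H s r h1 h2 h3) as I1.
  pose proof (is_RInt_const s r K) as I2.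
  exact (is_RInt_le _ _ s r _ _ h2 I2 I1 HK).
Qed.

Lemma phase (F : R -> R) (M m eps A z t0 T : R) (N : nat) (g : R -> R) :
  0 < T -> (0 < N)%nat -> 0 < m -> 0 <= M -> 0 < eps -> Bnd F M ->
  (forall w, z - A <= w <= z - eps -> m <= F w) ->
  (forall w, z + eps <= w <= z + A -> F w <= - m) ->
  SolOnT (fun _ w => F w) t0 (t0 + T) g ->
  eps + 3 * M * (T / INR N) <= A -> Rabs (g t0 - z) + M * (T / INR N) <= A ->
  Rabs (g (t0 + T) - z) <= Rmax (eps + 2 * M * (T / INR N)) (Rabs (g t0 - z) - m * T).
Proof.
  intros HT HN Hm HM He HB Hlo Hhi HS HA1 HA2.
  set (d := T / INR N) in *.
  assert (HNr : 0 < INR N) by (apply lt_0_INR; lia).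
  assert (Hd : 0 < d) by (unfold d; apply Rdiv_lt_0_compat; auto).
  assert (HTd : INR N * d = T) by (unfold d; field; lra).
  set (V0 := Rabs (g t0 - z)) in *.
  assert (Claim : forall k, (k <= N)%nat ->
     Rabs (g (t0 + INR k * d) - z) <= Rmax (eps + 2 * M * d) (V0 - m * (INR k * d))).
  { induction k; intro Hk.
    - simpl. rewrite Rmult_0_l, Rplus_0_r, Rmult_0_r, Rminus_0_r. apply Rmax_r.
    - specialize (IHk ltac:(lia)).
      set (s := t0 + INR k * d) in *.
      assert (Hkr : INR (S k) <= INR N) by (apply le_INR; lia).
      assert (Hs0 : t0 <= s) by (unfold s; pose proof (pos_INR k); nra).
      assert (Hs1 : s + d <= t0 + T) by (unfold s; rewrite S_INR in Hkr; nra).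
      replace (t0 + INR (S k) * d) with (s + d) by (unfold s; rewrite S_INR; ring).
      rewrite S_INR.
      set (v := Rabs (g s - z)) in *.
      assert (Hmv : forall r, s <= r <= s + d -> Rabs (g r - g s) <= M * d).
      { intros r Hr. eapply Rle_trans. apply (sol_move F M t0 (t0 + T) g s r); auto; lra.
        nra. }
      assert (Hv : v + M * d <= A).
      { assert (0 <= m * (INR k * d)) by (apply Rmult_le_pos; [lra|]; apply Rmult_le_pos; [apply pos_INR|lra]).
        revert IHk. unfold Rmax. destruct Rle_dec; intros; lra. }
      pose proof (Hmv (s + d) ltac:(lra)) as Hend.
      destruct (Rle_dec (eps + M * d) v) as [Hbig|Hsmall].
      + destruct (Rle_dec z (g s)) as [Hpos|Hneg].
        * assert (Hgs : g s - z = v) by (unfold v; rewrite Rabs_right; lra).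
          assert (Hup : g (s + d) - g s <= (s + d - s) * (- m)).
          { apply (sol_upper F t0 (t0 + T)); auto; try lra.
            intros u Hu. apply Hhi. pose proof (Hmv u ltac:(lra)) as Hu2.
            apply Rabs_le_inv in Hu2 as [? ?]. lra. }
          apply Rabs_le_inv in Hend as [? ?].
          rewrite Rabs_right by lra.
          revert IHk. unfold Rmax. repeat destruct Rle_dec; intros; nra.
        * assert (Hgs : z - g s = v) by (unfold v; rewrite Rabs_left; lra).
          assert (Hup : (s + d - s) * m <= g (s + d) - g s).
          { apply (sol_lower F t0 (t0 + T)); auto; try lra.
            intros u Hu. apply Hlo. pose proof (Hmv u ltac:(lra)) as Hu2.
            apply Rabs_le_inv in Hu2 as [? ?]. lra. }
          apply Rabs_le_inv in Hend as [? ?].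
          rewrite Rabs_left1 by lra.
          revert IHk. unfold Rmax. repeat destruct Rle_dec; intros; nra.
      + assert (Hw : Rabs (g (s + d) - z) <= v + M * d).
        { replace (g (s + d) - z) with ((g (s + d) - g s) + (g s - z)) by ring.
          eapply Rle_trans. apply Rabs_triang. unfold v. lra. }
        unfold Rmax. destruct Rle_dec; lra. }
  pose proof (Claim N (le_n N)) as C. rewrite HTd in C. exact C.
Qed.
Lemma tdist_nonneg a b : 0 <= tdist a b.
Proof. unfold tdist. destruct (base_fp (a - b)). unfold Rmin; destruct Rle_dec; lra. Qed.

Lemma tdist_le a b (k : Z) : tdist a b <= Rabs (a - b - IZR k).
Proof.
  unfold tdist. destruct (base_fp (a - b)) as [h1 h2].
  set (f := frac_part (a - b)) in *.
  assert (E : a - b - IZR k = f + IZR (Int_part (a - b) - k)).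
  { rewrite minus_IZR. unfold f, frac_part. ring. }
  rewrite E. set (j := (Int_part (a - b) - k)%Z).
  destruct (Z_le_gt_dec 0 j) as [Hj|Hj].
  - apply IZR_le in Hj. rewrite Rabs_right by lra. pose proof (Rmin_l f (1 - f)). lra.
  - assert (Hj' : (j <= -1)%Z) by lia. apply IZR_le in Hj'.
    rewrite Rabs_left by lra. pose proof (Rmin_r f (1 - f)). lra.
Qed.

Lemma sin_per_Z th (j : Z) : sin (th + 2 * PI * IZR j) = sin th.
Proof.
  assert (Hp : periodic1 (fun t => sin (2 * PI * t))).
  { intro x. replace (2 * PI * (x + 1)) with (2 * PI * x + 2 * PI) by ring.
    rewrite sin_plus, sin_2PI, cos_2PI. ring. }
  pose proof (periodic_Z _ Hp (th / (2 * PI)) j) as H. simpl in H.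
  pose proof PI_RGT_0.
  replace (2 * PI * (th / (2 * PI) + IZR j)) with (th + 2 * PI * IZR j) in H by (field; lra).
  replace (2 * PI * (th / (2 * PI))) with th in H by (field; lra). exact H.
Qed.

Lemma sin_lb a0 th : 0 < a0 <= PI / 2 -> a0 <= th <= PI - a0 -> sin a0 <= sin th.
Proof.
  intros Ha Hth. pose proof PI_RGT_0.
  destruct (Rle_dec th (PI / 2)).
  - apply sin_incr_1; lra.
  - rewrite <- (sin_PI_x th). apply sin_incr_1; lra.
Qed.

Lemma sin_shift_id u (j : Z) w :
  sin (2 * PI * w + - (2 * PI * u)) = - sin (2 * PI * (w - (u + 1/2 + IZR j))).
Proof.
  replace (2 * PI * w + - (2 * PI * u)) with ((2 * PI * (w - (u + 1/2 + IZR j)) + PI) + 2 * PI * IZR j) by field.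
  rewrite sin_per_Z, neg_sin. reflexivity.
Qed.

Lemma region (D : R -> R) M0 K u (j : Z) eps : Bnd D M0 -> 0 < eps <= 1/16 -> 0 <= K ->
  (forall w, u + 1/2 + IZR j - 7/16 <= w <= u + 1/2 + IZR j - eps ->
      K * sin (2 * PI * eps) - M0 <= D w + K * sin (2 * PI * w + - (2 * PI * u))) /\
  (forall w, u + 1/2 + IZR j + eps <= w <= u + 1/2 + IZR j + 7/16 ->
      D w + K * sin (2 * PI * w + - (2 * PI * u)) <= - (K * sin (2 * PI * eps) - M0)) /\
  Bnd (fun w => D w + K * sin (2 * PI * w + - (2 * PI * u))) (M0 + K).
Proof.
  intros HB He HK. pose proof PI_RGT_0 as Hpi.
  set (z := u + 1/2 + IZR j).
  assert (Hs : forall v, eps <= v <= 7/16 -> sin (2 * PI * eps) <= sin (2 * PI * v)).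
  { intros v Hv. apply sin_lb; nra. }
  split; [|split].
  - intros w Hw. rewrite (sin_shift_id u j w). fold z.
    replace (2 * PI * (w - z)) with (- (2 * PI * (z - w))) by ring. rewrite sin_neg, Ropp_involutive.
    pose proof (Hs (z - w) ltac:(lra)). pose proof (HB w). apply Rabs_le_inv in H0. nra.
  - intros w Hw. rewrite (sin_shift_id u j w). fold z.
    pose proof (Hs (w - z) ltac:(lra)). pose proof (HB w). apply Rabs_le_inv in H0. nra.
  - intro w. eapply Rle_trans. apply Rabs_triang. rewrite Rabs_mult, (Rabs_right K) by lra.
    pose proof (HB w). pose proof (SIN_bound (2 * PI * w + - (2 * PI * u))).
    assert (Rabs (sin (2 * PI * w + - (2 * PI * u))) <= 1) by (apply Rabs_le; lra). nra.
Qed.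

Definition C0 p := 1/8 <= p /\ p <= 7/8.
Definition C1 p := p <= 1/8 \/ 3/8 <= p.
Definition C2 p := p <= 3/8 \/ 5/8 <= p.
Definition C3 p := p <= 5/8 \/ 7/8 <= p.
Definition good c p := exists k : Z, Rabs (p - (c + 1/2) - IZR k) <= 3/8.

Lemma goodC0 p : C0 p -> good 0 p.
Proof. intros [? ?]. exists 0%Z. apply Rabs_le. simpl. lra. Qed.
Lemma goodC1 p : 0 <= p < 1 -> C1 p -> good (1/4) p.
Proof. intros ? [?|?]; [exists (-1)%Z|exists 0%Z]; apply Rabs_le; simpl; lra. Qed.
Lemma goodC2 p : 0 <= p < 1 -> C2 p -> good (1/2) p.
Proof. intros ? [?|?]; [exists (-1)%Z|exists 0%Z]; apply Rabs_le; simpl; lra. Qed.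
Lemma goodC3 p : 0 <= p < 1 -> C3 p -> good (3/4) p.
Proof. intros ? [?|?]; [exists (-1)%Z|exists 0%Z]; apply Rabs_le; simpl; lra. Qed.

Lemma choose_c p1 p2 p3 : 0 <= p1 < 1 -> 0 <= p2 < 1 -> 0 <= p3 < 1 ->
  exists c, good c p1 /\ good c p2 /\ good c p3.
Proof.
  intros H1 H2 H3.
  destruct (classic (C0 p1 /\ C0 p2 /\ C0 p3)) as [[? [? ?]]|N0].
  { exists 0. repeat split; apply goodC0; auto. }
  destruct (classic (C1 p1 /\ C1 p2 /\ C1 p3)) as [[? [? ?]]|N1].
  { exists (1/4). repeat split; apply goodC1; auto. }
  destruct (classic (C2 p1 /\ C2 p2 /\ C2 p3)) as [[? [? ?]]|N2].
  { exists (1/2). repeat split; apply goodC2; auto. }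
  destruct (classic (C3 p1 /\ C3 p2 /\ C3 p3)) as [[? [? ?]]|N3].
  { exists (3/4). repeat split; apply goodC3; auto. }
  exfalso. unfold C0, C1, C2, C3 in *.
  repeat match goal with
  | H : ~ (_ /\ _) |- _ => apply not_and_or in H
  | H : ~ (_ \/ _) |- _ => apply not_or_and in H
  | H : ~ (_ <= _) |- _ => apply Rnot_le_lt in H
  | H : _ /\ _ |- _ => destruct H
  | H : _ \/ _ |- _ => destruct H
  end; lra.
Qed.
Lemma fp_range r : 0 <= frac_part r < 1.
Proof. destruct (base_fp r); lra. Qed.

Lemma phase_apply F M m eps z t0 (N : nat) g :
  Bnd F M -> 0 <= M -> 1 <= m -> 0 < eps <= 1/64 -> (0 < N)%nat -> M * (1/2 / INR N) <= eps / 2 ->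
  (forall w, z - 7/16 <= w <= z - eps -> m <= F w) ->
  (forall w, z + eps <= w <= z + 7/16 -> F w <= - m) ->
  SolOnT (fun _ w => F w) t0 (t0 + 1/2) g -> Rabs (g t0 - z) <= 3/8 + 2 * eps ->
  Rabs (g (t0 + 1/2) - z) <= 2 * eps.
Proof.
  intros HB HM Hm He HN HMd Hlo Hhi HS H0.
  pose proof (phase F M m eps (7/16) z t0 (1/2) N g ltac:(lra) HN ltac:(lra) HM ltac:(lra) HB Hlo Hhi HS ltac:(lra) ltac:(lra)) as P.
  eapply Rle_trans. exact P. unfold Rmax. destruct Rle_dec; lra.
Qed.

Definition Fv c sigma a S b1 bm1 (v : R * R) (w : R) :=
  drift c sigma a S w + sigma * (b1 w * fst v + bm1 w * snd v).

Lemma region_F (F D : R -> R) M0 K u eps :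
  (forall w, F w = D w + K * sin (2 * PI * w + - (2 * PI * u))) ->
  Bnd D M0 -> 0 < eps <= 1/16 -> 0 <= K -> K * sin (2 * PI * eps) - M0 = 1 ->
  Bnd F (M0 + K) /\ forall j : Z,
  (forall w, u + 1/2 + IZR j - 7/16 <= w <= u + 1/2 + IZR j - eps -> 1 <= F w) /\
  (forall w, u + 1/2 + IZR j + eps <= w <= u + 1/2 + IZR j + 7/16 -> F w <= - 1).
Proof.
  intros EF HB He HK H1. split.
  - destruct (region D M0 K u 0%Z eps HB He HK) as [_ [_ R3]].
    intro w. rewrite EF. apply R3.
  - intro j. destruct (region D M0 K u j eps HB He HK) as [R1 [R2 _]].
    split; intros w Hw; rewrite EF.
    + pose proof (R1 w Hw). lra.
    + pose proof (R2 w Hw). lra.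
Qed.
Theorem lemma4p11 (c sigma : R) (a S b1 bm1 : R -> R) :
  0 < sigma ->
  smooth a -> periodic1 a ->
  smooth S -> periodic1 S ->
  smooth b1 -> periodic1 b1 ->
  smooth bm1 -> periodic1 bm1 ->
  span_is_sinusoids b1 bm1 ->
  forall x1 x2 y : R, tdist x1 x2 <> 0 ->
  exists h : R -> R * R, pc_cs h /\
    (exists g1, ctrl_sol c sigma a S b1 bm1 h x1 g1) /\
    (exists g2, ctrl_sol c sigma a S b1 bm1 h x2 g2) /\
    forall g1 g2, ctrl_sol c sigma a S b1 bm1 h x1 g1 ->
                  ctrl_sol c sigma a S b1 bm1 h x2 g2 ->
      Rmax (tdist (g1 1) y) (tdist (g2 1) y) <= 3 / 2 * tdist x1 x2.
Proof.
  intros Hsig sa pa sS pS sb pb sbm pbm Hspan x1 x2 y Hd.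
  assert (LD : lipb (drift c sigma a S)).
  { apply lipb_ext with (fun w => c + (sigma^2 * a w + (sigma^2 * - / 2) * S w)).
    apply lipb_plus. apply lipb_const. apply lipb_plus; apply lipb_scal; apply smooth_lipb; auto.
    intro w. unfold drift. ring. }
  assert (LF : forall v, lipb (Fv c sigma a S b1 bm1 v)).
  { intro v. apply lipb_ext with (fun w => drift c sigma a S w + ((sigma * fst v) * b1 w + (sigma * snd v) * bm1 w)).
    apply lipb_plus; auto. apply lipb_plus; apply lipb_scal; apply smooth_lipb; auto.
    intro w. unfold Fv. ring. }
  destruct LD as [LD [M0 [HLD [HM0 [_ HBD]]]]].
  set (d := tdist x1 x2) in *.
  assert (Hd0 : 0 < d).
  { destruct (tdist_nonneg x1 x2) as [H|H]; [exact H|]. exfalso. apply Hd. symmetry. exact H. }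
  set (eps := Rmin (1/64) (d/2)).
  assert (He : 0 < eps <= 1/64) by (unfold eps, Rmin; destruct Rle_dec; lra).
  assert (He2 : 2 * eps <= d) by (unfold eps, Rmin; destruct Rle_dec; lra).
  pose proof PI_RGT_0 as Hpi. pose proof PI_4 as Hpi4.
  set (se := sin (2 * PI * eps)).
  assert (Hse : 0 < se) by (apply sin_gt_0; nra).
  set (K := (1 + M0) / se).
  assert (HK : 0 <= K) by (unfold K; apply Rle_mult_inv_pos; lra).
  assert (HKs : K * sin (2 * PI * eps) - M0 = 1) by (fold se; unfold K; field; lra).
  destruct (choose_c (frac_part x1) (frac_part x2) (frac_part y) (fp_range _) (fp_range _) (fp_range _))
    as [cc [[k1 Hk1] [[k2 Hk2] [k3 Hk3]]]].
  destruct (proj2 Hspan (K / sigma) (- (2 * PI * cc))) as [al1 [be1 E1]].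
  destruct (proj2 Hspan (K / sigma) (- (2 * PI * (y - 1/2)))) as [al2 [be2 E2]].
  set (v0 := (al1, be1)). set (v1 := (al2, be2)).
  set (F0 := Fv c sigma a S b1 bm1 v0). set (F1 := Fv c sigma a S b1 bm1 v1).
  assert (EF0 : forall w, F0 w = drift c sigma a S w + K * sin (2 * PI * w + - (2 * PI * cc))).
  { intro w. unfold F0, Fv, v0; simpl. replace (b1 w * al1 + bm1 w * be1) with (al1 * b1 w + be1 * bm1 w) by ring.
    rewrite E1. field. lra. }
  assert (EF1 : forall w, F1 w = drift c sigma a S w + K * sin (2 * PI * w + - (2 * PI * (y - 1/2)))).
  { intro w. unfold F1, Fv, v1; simpl. replace (b1 w * al2 + bm1 w * be2) with (al2 * b1 w + be2 * bm1 w) by ring.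
    rewrite E2. field. lra. }
  destruct (region_F F0 _ M0 K cc eps EF0 HBD ltac:(lra) HK HKs) as [B0 R0].
  destruct (region_F F1 _ M0 K (y - 1/2) eps EF1 HBD ltac:(lra) HK HKs) as [B1 R1].
  set (M := M0 + K).
  destruct (nat_unbounded (M / eps)) as [N HN].
  assert (HMe : 0 <= M / eps) by (unfold M; apply Rle_mult_inv_pos; lra).
  assert (HN0 : (0 < N)%nat) by (destruct N; [simpl in HN; lra | lia]).
  assert (HNr : 0 < INR N) by (apply lt_0_INR; lia).
  assert (HMd : M * (1/2 / INR N) <= eps / 2).
  { apply Rmult_lt_compat_r with (r := eps) in HN; [|lra].
    replace (M / eps * eps) with M in HN by (field; lra).
    replace (M * (1/2 / INR N)) with (M / INR N / 2) by (field; lra).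
    apply Rmult_le_reg_r with (r := 2). lra.
    replace (M / INR N / 2 * 2) with (M / INR N) by (field; lra).
    replace (eps / 2 * 2) with eps by field.
    apply Rmult_le_reg_r with (r := INR N). lra.
    replace (M / INR N * INR N) with M by (field; lra). lra. }
  set (h := fun s => if Rlt_dec s (1/2) then v0 else if Rlt_dec s 1 then v1 else (0, 0)).
  destruct (LF v0) as [L0 [M0' [HL0 [HM0' [HLip0 HBnd0]]]]].
  destruct (LF v1) as [L1 [M1' [HL1 [HM1' [HLip1 HBnd1]]]]].
  assert (Ex : forall x, exists g, ctrl_sol c sigma a S b1 bm1 h x g).
  { intro x.
    destruct (exist_sol F0 L0 M0' 0 (1/2) HL0 HM0' HLip0 HBnd0 ltac:(lra) x) as [ga [Hga Sa]].
    destruct (exist_sol F1 L1 M1' (1/2) 1 HL1 HM1' HLip1 HBnd1 ltac:(lra) (ga (1/2))) as [gb [Hgb Sb]].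
    set (g := fun r => if Rle_dec r (1/2) then ga r else gb r).
    exists g.
    assert (SG : SolOnT (fun r w => Fv c sigma a S b1 bm1 (h r) w) 0 1 g).
    { apply SolOnT_glue with (1/2); try lra.
      - eapply SolOnT_ext with (g := ga); [exact Sa | |].
        + intros r Hr. unfold g, h. destruct (Rle_dec r (1/2)); [|lra].
          destruct (Rlt_dec r (1/2)); [reflexivity | lra].
        + intros r Hr. unfold g. destruct Rle_dec; [reflexivity|lra].
      - eapply SolOnT_ext with (g := gb); [exact Sb | |].
        + intros r Hr. unfold g, h. destruct (Rle_dec r (1/2)); [lra|].
          destruct (Rlt_dec r (1/2)); [lra|]. destruct (Rlt_dec r 1); [reflexivity|lra].
        + intros r Hr. unfold g. destruct Rle_dec; [|reflexivity]. replace r with (1/2) by lra. auto. }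
    intros t Ht. assert (Hg0 : g 0 = x) by (unfold g; destruct Rle_dec; [auto|lra]).
    pose proof (SG 0 t ltac:(lra) ltac:(lra) ltac:(lra)) as I. rewrite Hg0 in I. exact I. }
  assert (Est : forall x g (k : Z), Rabs (x - (cc + 1/2) - IZR k) <= 3/8 ->
             ctrl_sol c sigma a S b1 bm1 h x g -> tdist (g 1) y <= 2 * eps).
  { intros x g k Hk G.
    assert (Hg0 : g 0 = x).
    { pose proof (G 0 ltac:(lra)) as I. apply (@is_RInt_unique R_CompleteNormedModule) in I.
      rewrite RInt_point in I. simpl in I. unfold zero in I; simpl in I. lra. }
    assert (SG : SolOnT (fun r w => Fv c sigma a S b1 bm1 (h r) w) 0 1 g).
    { apply SolOnT_base. intros t Ht. rewrite Hg0. exact (G t Ht). }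
    assert (S0 : SolOnT (fun _ w => F0 w) 0 (0 + 1/2) g).
    { eapply SolOnT_ext with (g := g); [apply SolOnT_restr with 0 1; [exact SG|lra|lra] | |].
      + intros r Hr. unfold h. destruct (Rlt_dec r (1/2)); [reflexivity|lra].
      + reflexivity. }
    destruct (R0 k) as [Rl0 Rh0].
    pose proof (phase_apply F0 M 1 eps (cc + 1/2 + IZR k) 0 N g B0 ltac:(unfold M; lra) ltac:(lra) He HN0 HMd Rl0 Rh0 S0) as P0.
    replace (0 + 1/2) with (1/2) in P0 by lra.
    assert (P0' : Rabs (g (1/2) - (cc + 1/2 + IZR k)) <= 2 * eps).
    { apply P0. rewrite Hg0. replace (x - (cc + 1/2 + IZR k)) with (x - (cc + 1/2) - IZR k) by ring. lra. }
    set (j := (k - k3 - Int_part y)%Z).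
    assert (S1 : SolOnT (fun _ w => F1 w) (1/2) (1/2 + 1/2) g).
    { eapply SolOnT_ext with (g := g); [apply SolOnT_restr with 0 1; [exact SG|lra|lra] | |].
      + intros r Hr. unfold h. destruct (Rlt_dec r (1/2)); [lra|]. destruct (Rlt_dec r 1); [reflexivity|lra].
      + reflexivity. }
    destruct (R1 j) as [Rl1 Rh1].
    assert (Hstart : Rabs (g (1/2) - (y - 1/2 + 1/2 + IZR j)) <= 3/8 + 2 * eps).
    { replace (g (1/2) - (y - 1/2 + 1/2 + IZR j)) with
        ((g (1/2) - (cc + 1/2 + IZR k)) - (frac_part y - (cc + 1/2) - IZR k3)).
      eapply Rle_trans. apply Rabs_triang. rewrite Rabs_Ropp. lra.
      unfold j. rewrite !minus_IZR. unfold frac_part. ring. }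
    pose proof (phase_apply F1 M 1 eps (y - 1/2 + 1/2 + IZR j) (1/2) N g B1 ltac:(unfold M; lra) ltac:(lra) He HN0 HMd Rl1 Rh1 S1 Hstart) as P1.
    replace (1/2 + 1/2) with 1 in P1 by lra.
    eapply Rle_trans. apply (tdist_le (g 1) y j).
    replace (g 1 - y - IZR j) with (g 1 - (y - 1/2 + 1/2 + IZR j)) by ring. exact P1. }
  exists h. split; [|split; [|split]].
  - exists 2%nat, (fun i => match i with 0%nat => 0 | 1%nat => 1/2 | _ => 1 end),
      (fun i => match i with 0%nat => v0 | _ => v1 end).
    split; [reflexivity|]. split; [|split].
    + intros i Hi. destruct i as [|[|i]]; simpl; [lra|lra|lia].
    + intros i s Hi Hs. destruct i as [|[|i]]; simpl in *; unfold h.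
      * destruct (Rlt_dec s (1/2)); [reflexivity|lra].
      * destruct (Rlt_dec s (1/2)); [lra|]. destruct (Rlt_dec s 1); [reflexivity|lra].
      * lia.
    + intros s Hs. simpl in Hs. unfold h. destruct Rlt_dec; [lra|]. destruct Rlt_dec; [lra|reflexivity].
  - apply Ex.
  - apply Ex.
  - intros g1 g2 G1 G2.
    assert (T1 : tdist (g1 1) y <= 2 * eps).
    { apply (Est x1 g1 (k1 + Int_part x1)%Z); auto. rewrite plus_IZR.
      replace (x1 - (cc + 1/2) - (IZR k1 + IZR (Int_part x1))) with (frac_part x1 - (cc + 1/2) - IZR k1)
        by (unfold frac_part; ring). exact Hk1. }
    assert (T2 : tdist (g2 1) y <= 2 * eps).
    { apply (Est x2 g2 (k2 + Int_part x2)%Z); auto. rewrite plus_IZR.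
      replace (x2 - (cc + 1/2) - (IZR k2 + IZR (Int_part x2))) with (frac_part x2 - (cc + 1/2) - IZR k2)
        by (unfold frac_part; ring). exact Hk2. }
    unfold Rmax. destruct Rle_dec; lra.
Qed.
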